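(* Let $\mathcal{H}$ be a real separable Hilbert space, let $0<r<1$, let $m,m_0\in\mathcal{H}$, and let $C,C_0$ be self-adjoint, compact, positive operators on $\mathcal{H}$. Then $$\lim_{\gamma\to0^+}\langle m-m_0,[(1-r)(C+\gamma I)+r(C_0+\gamma I)]^{-1}(m-m_0)\rangle=\begin{cases}\|[(1-r)C+rC_0]^{-1/2}(m-m_0)\|^2 & \text{if } m-m_0\in\mathrm{Im}\big([(1-r)C+rC_0]^{1/2}\big),\\ \infty & \text{otherwise}.\end{cases}$$ In particular, $\|[(1-r)C+rC_0]^{-1/2}(m-m_0)\|^2<\infty$ whenever $m-m_0\in\mathrm{Im}(C_0^{1/2})$.
   Context: For a self-adjoint positive compact operator $T$ and $y\in\mathrm{Im}(T^{1/2})$, $T^{-1/2}y$ denotes the unique preimage of $y$ under $T^{1/2}$ lying in $\ker(T)^{\perp}$ (when $\ker T=\{0\}$ this is simply the unique preimage). *)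

(* Defs.v *)
From HB Require Import structures.
From mathcomp Require Import all_boot all_order all_algebra.
From mathcomp Require Import all_classical all_reals all_analysis.
Set Implicit Arguments. Unset Strict Implicit. Unset Printing Implicit Defensive.
Import Order.TTheory GRing.Theory Num.Theory.
Import numFieldNormedType.Exports.
Local Open Scope classical_set_scope.
Local Open Scope ring_scope.

(* A real Hilbert space is modelled as a complete normed space V over a
   real field R together with a real inner product ip inducing the norm. *)
Definition is_inner_product (R : realType) (V : completeNormedModType R)
  (ip : V -> V -> R) : Prop :=
  [/\ forall (a : R) (x y z : V), ip (a *: x + y) z = a * ip x z + ip y z,
      forall x y : V, ip x y = ip y x
    & forall x : V, ip x x = `|x| ^+ 2].

Definition separable (R : realType) (V : completeNormedModType R) : Prop :=
  exists D : set V, countable D /\ closure D = setT.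

Definition linear_op (R : realType) (V : completeNormedModType R) (T : V -> V)
  : Prop := forall (a : R) (x y : V), T (a *: x + y) = a *: T x + T y.

Definition compact_op (R : realType) (V : completeNormedModType R) (T : V -> V)
  : Prop := linear_op T /\ compact (closure (T @` [set x : V | `|x| <= 1])).

Definition self_adjoint (R : realType) (V : completeNormedModType R)
  (ip : V -> V -> R) (T : V -> V) : Prop := forall x y, ip (T x) y = ip x (T y).

Definition positive_op (R : realType) (V : completeNormedModType R)
  (ip : V -> V -> R) (T : V -> V) : Prop := forall x, 0 <= ip (T x) x.

Definition is_pos_sqrt (R : realType) (V : completeNormedModType R)
  (ip : V -> V -> R) (T S : V -> V) : Prop :=
  [/\ linear_op S, continuous S, self_adjoint ip S, positive_op ip S
    & forall x, S (S x) = T x].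

(* <v, A^{-1} v>, where A^{-1} v is the (unique, when A is invertible)
   solution x of A x = v *)
Definition quad_inv (R : realType) (V : completeNormedModType R)
  (ip : V -> V -> R) (A : V -> V) (v : V) : R :=
  ip v (xget 0 [set x | A x = v]).

(* Main.v *)
Require Import Defs.
From HB Require Import structures.
From mathcomp Require Import all_boot all_order all_algebra.
From mathcomp Require Import all_classical all_reals all_analysis.
From mathcomp Require Import ring lra.
Import Order.TTheory GRing.Theory Num.Theory.
Import numFieldNormedType.Exports.
Local Open Scope classical_set_scope.
Local Open Scope ring_scope.
Set Implicit Arguments. Unset Strict Implicit.

Section IP.
Variables (R : realType) (V : completeNormedModType R) (ip : V -> V -> R).
Hypothesis hip : is_inner_product ip.

Lemma ipDZl a x y z : ip (a *: x + y) z = a * ip x z + ip y z.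
Proof. by case: hip. Qed.
Lemma ipC x y : ip x y = ip y x.
Proof. by case: hip. Qed.
Lemma ipxx x : ip x x = `|x| ^+ 2.
Proof. by case: hip. Qed.
Lemma ipDl x y z : ip (x + y) z = ip x z + ip y z.
Proof. by rewrite -[x]scale1r ipDZl mul1r scale1r. Qed.
Lemma ip0l z : ip 0 z = 0.
Proof.
have := ipDl 0 0 z; rewrite addr0 => /eqP; rewrite -subr_eq0.
by rewrite opprD addrA subrr add0r oppr_eq0 => /eqP.
Qed.
Lemma ipZl a x z : ip (a *: x) z = a * ip x z.
Proof. by rewrite -[a *: x]addr0 ipDZl ip0l addr0. Qed.
Lemma ipNl x z : ip (- x) z = - ip x z.
Proof. by rewrite -scaleN1r ipZl mulN1r. Qed.
Lemma ipBl x y z : ip (x - y) z = ip x z - ip y z.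
Proof. by rewrite ipDl ipNl. Qed.
Lemma ipDr x y z : ip z (x + y) = ip z x + ip z y.
Proof. by rewrite ipC ipDl !(ipC z). Qed.
Lemma ipZr a x z : ip z (a *: x) = a * ip z x.
Proof. by rewrite ipC ipZl ipC. Qed.
Lemma ipNr x z : ip z (- x) = - ip z x.
Proof. by rewrite ipC ipNl ipC. Qed.
Lemma ipBr x y z : ip z (x - y) = ip z x - ip z y.
Proof. by rewrite ipDr ipNr. Qed.
Lemma ip0r z : ip z 0 = 0.
Proof. by rewrite ipC ip0l. Qed.
Lemma ipxx_ge0 x : 0 <= ip x x.
Proof. by rewrite ipxx sqr_ge0. Qed.

Lemma ip_sq_expand x y : ip (x - y) (x - y) = ip x x - 2 * ip x y + ip y y.
Proof. rewrite ipBl !ipBr (ipC y x); ring. Qed.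

Lemma CS_sq x y : ip x y ^+ 2 <= ip x x * ip y y.
Proof.
set a := ip x y; set b := ip y y.
have h := ipxx_ge0 (b *: x - a *: y).
rewrite ip_sq_expand !ipZl !ipZr -/a -/b in h.
have hb : 0 <= b by apply: ipxx_ge0.
have hxx := ipxx_ge0 x.
case: (ltrgt0P b) hb => // [bpos|b0] _.
  nra.
have y0 : y = 0.
  by apply/eqP; rewrite -normr_eq0 -sqrf_eq0 -ipxx -/b b0.
by rewrite /a y0 ip0r expr0n /= b0 mulr0.
Qed.

Lemma CS x y : `|ip x y| <= `|x| * `|y|.
Proof.
have h := CS_sq x y; rewrite !ipxx in h.
rewrite -(@ler_pXn2r R 2 isT) ?nnegrE ?mulr_ge0 //.
by rewrite exprMn real_normK ?num_real.
Qed.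
End IP.

Lemma zmod_aux (U : zmodType) (v x y z w : U) :
  (v + x - y) - (v + z - w) = (x - z) - (y - w).
Proof. rewrite -[v + x - y]addrA -[v + z - w]addrA opprD addrACA subrr add0r.
by rewrite !opprD !opprK addrACA. Qed.

Section Main.
Variables (R : realType) (V : completeNormedModType R) (ip : V -> V -> R).
Hypothesis hip : is_inner_product ip.
Variable S : V -> V.
Hypotheses (Slin : linear_op S) (Scont : continuous S) (Ssa : self_adjoint ip S).
Variable v : V.

Lemma S0 : S 0 = 0.
Proof.
have := Slin 1 0 0; rewrite !scale1r addr0 => /eqP; rewrite -subr_eq0.
by rewrite opprD addrA subrr add0r oppr_eq0 => /eqP.
Qed.
Lemma SZ a x : S (a *: x) = a *: S x.
Proof. by rewrite -[a *: x]addr0 Slin S0 addr0. Qed.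
Lemma SD x y : S (x + y) = S x + S y.
Proof. by rewrite -[x]scale1r Slin !scale1r. Qed.
Lemma SB x y : S (x - y) = S x - S y.
Proof. by rewrite SD -scaleN1r SZ scaleN1r. Qed.

Lemma S_bounded : exists2 M, 0 < M & forall y, `|S y| <= M * `|y|.
Proof.
have := iffLR (cvgrPdist_lt _ _) (@Scont 0) 1 ltr01.
rewrite S0 => /(_ (nbhs_filter 0)) /nbhs_norm0P [d /= dpos hd].
exists (2 / d); first by rewrite divr_gt0.
move=> y; have [->|y0] := eqVneq y 0; first by rewrite S0 !normr0 mulr0.
have ny : 0 < `|y| by rewrite normr_gt0.
set k := d / (2 * `|y|).
have kpos : 0 < k by rewrite divr_gt0 // mulr_gt0.
have ek : k * `|y| = d / 2 by rewrite /k; field; rewrite gt_eqF.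
have : `|k *: y| < d.
  by rewrite normrZ gtr0_norm // ek; lra.
move=> /hd /=; rewrite sub0r normrN SZ normrZ gtr0_norm // => h.
have e2 : 2 / d * `|y| = k^-1 by rewrite /k; field; rewrite ?gt_eqF.
by rewrite e2; apply: ltW; rewrite -(ltr_pM2l kpos) mulfV ?gt_eqF.
Qed.

Definition Ag (g : R) (y : V) := S (S y) + g *: y.

Lemma ipA g a b : ip (Ag g a) b = ip (S a) (S b) + g * ip a b.
Proof. by rewrite /Ag ipDl // ipZl // Ssa. Qed.

Lemma AgB g a b : Ag g (a - b) = Ag g a - Ag g b.
Proof. rewrite /Ag !SB scalerBr; by rewrite opprD addrACA. Qed.

Lemma Ag_inj g a b : 0 < g -> Ag g a = Ag g b -> a = b.
Proof.
move=> gpos e; have : Ag g (a - b) = 0 by rewrite AgB e subrr.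
move=> /(congr1 (fun z => ip z (a - b))); rewrite ipA ip0l //.
have h1 := ipxx_ge0 hip (S (a - b)); have h2 := ipxx_ge0 hip (a - b).
move=> e2; have : ip (a - b) (a - b) = 0 by nra.
by rewrite ipxx // => /eqP; rewrite sqrf_eq0 normr_eq0 subr_eq0 => /eqP.
Qed.

Lemma Ag_ex g : 0 < g -> exists y, Ag g y = v.
Proof.
move=> gpos; have [M Mpos hM] := S_bounded.
pose K := M ^+ 2; pose c := K + g.
have Kpos : 0 < K by rewrite exprn_gt0.
have cpos : 0 < c by rewrite addr_gt0.
pose Phi y := c^-1 *: (v + K *: y - S (S y)).
have Tb d : `|K *: d - S (S d)| <= K * `|d|.
  have hK : 0 <= K * `|d| by rewrite mulr_ge0 // ltW.
  rewrite -(@ler_pXn2r R 2 isT) ?nnegrE //.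
  have h3 : ip (S (S d)) (S (S d)) <= K * ip (S d) (S d).
    rewrite !(ipxx hip) /K -exprMn (@ler_pXn2r R 2 isT) ?nnegrE //.
    by rewrite mulr_ge0 // ltW.
  have hB : 0 <= K * ip (S d) (S d) by apply: mulr_ge0; [exact: ltW | exact: ipxx_ge0].
  rewrite -(ipxx hip) exprMn -(ipxx hip d) ip_sq_expand //.
  rewrite !(ipZl hip) !(ipZr hip) -(Ssa d (S d)).
  have hA : 0 <= ip d d by exact: ipxx_ge0.
  nra.
have lipPhi a b : `|Phi a - Phi b| <= K / c * `|a - b|.
  have -> : Phi a - Phi b = c^-1 *: (K *: (a - b) - S (S (a - b))).
    rewrite /Phi -scalerBr; congr (_ *: _).
    by rewrite zmod_aux !SB scalerBr.
  have ci : 0 <= c^-1 by rewrite invr_ge0 ltW.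
  rewrite normrZ (ger0_norm ci) [K / c * _]mulrAC [K * _ / c]mulrC.
  by apply: ler_wpM2l => //; exact: Tb.
have q0 : 0 <= K / c by rewrite divr_ge0 // ltW.
have [p _ hp] : exists2 p, setT p & p = (totalfun Phi : {fun setT >-> setT}) p.
  apply: banach_fixed_point.
- exists (NngNum q0); split => /=.
    by rewrite ltr_pdivrMr // mul1r /c ltrDl.
  move=> [a b] _ /=; exact: lipPhi.
- exact: closedT.
- by exists 0.
exists p.
have e : c *: p = v + K *: p - S (S p).
  by rewrite {1}hp /= /Phi scalerA mulfV ?gt_eqF // scale1r.
have eg : g *: p = c *: p - K *: p by rewrite /c scalerDl addrAC subrr add0r.
by rewrite /Ag eg e [v + _ - _ - _]addrAC addrK addrCA subrr addr0.
Qed.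


Definition sol g := xget 0 [set y | Ag g y = v].
Definition Q g := quad_inv ip (Ag g) v.

Lemma solP g : 0 < g -> Ag g (sol g) = v.
Proof. by move=> gpos; apply: (xgetPex 0 (Ag_ex gpos)). Qed.

Lemma QE g : Q g = ip v (sol g).
Proof. by []. Qed.

Lemma Q_cross g h : 0 < h -> Q g = ip (S (sol h)) (S (sol g)) + h * ip (sol h) (sol g).
Proof. by move=> hpos; rewrite QE -{1}(solP hpos) ipA. Qed.

Lemma Q_expand g : 0 < g -> Q g = ip (S (sol g)) (S (sol g)) + g * ip (sol g) (sol g).
Proof. exact: Q_cross. Qed.

Lemma Q_ge g : 0 < g ->
  [/\ 0 <= ip (S (sol g)) (S (sol g)), 0 <= g * ip (sol g) (sol g),
      ip (S (sol g)) (S (sol g)) <= Q g & g * ip (sol g) (sol g) <= Q g].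
Proof.
move=> gpos; rewrite Q_expand //.
have h1 := ipxx_ge0 hip (S (sol g)).
have h2 : 0 <= g * ip (sol g) (sol g) by rewrite mulr_ge0 ?ipxx_ge0 // ltW.
by split => //; lra.
Qed.

Lemma Q_mono h g : 0 < h -> h <= g ->
  ip (S (sol h) - S (sol g)) (S (sol h) - S (sol g)) <= Q h - Q g.
Proof.
move=> hpos hg; have gpos : 0 < g by apply: lt_le_trans hg.
have a := Q_expand hpos; have b := Q_expand gpos.
have c := Q_cross g hpos; have d := Q_cross h gpos.
rewrite (ipC hip (S (sol g))) (ipC hip (sol g)) in d.
have e := ipxx_ge0 hip (sol h - sol g).
rewrite ip_sq_expand // in e.
have f1 : 0 <= (g - h) * ip (sol g) (sol g) by rewrite mulr_ge0 ?ipxx_ge0 // subr_ge0.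
have f2 : 0 <= h * (ip (sol h) (sol h) - 2 * ip (sol h) (sol g) + ip (sol g) (sol g)).
  by rewrite mulr_ge0 // ltW.
rewrite ip_sq_expand //.
nra.
Qed.

Lemma Q_le h g : 0 < h -> h <= g -> Q g <= Q h.
Proof.
move=> hpos hg; have := Q_mono hpos hg.
have := ipxx_ge0 hip (S (sol h) - S (sol g)); lra.
Qed.


Definition gs (n : nat) : R := (n.+1%:R)^-1.
Lemma gs_gt0 n : 0 < gs n.
Proof. by rewrite /gs invr_gt0 ltr0Sn. Qed.
Lemma gs_le n m : (n <= m)%N -> gs m <= gs n.
Proof.
move=> nm; rewrite /gs lef_pV2 ?posrE ?ltr0Sn // ler_nat; by [].
Qed.

Lemma SS_sol g : 0 < g -> S (S (sol g)) = v - g *: sol g.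
Proof. by move=> gpos; rewrite -{1}(solP gpos) /Ag addrK. Qed.

Lemma bounded_conv B : (forall n, Q (gs n) <= B) ->
  exists w, (fun n => S (sol (gs n))) @ \oo --> w /\ S w = v.
Proof.
move=> hB.
pose u n := Q (gs n).
pose w n := S (sol (gs n)).
have um : nondecreasing_seq u.
  by move=> n m nm; apply: Q_le; [exact: gs_gt0 | exact: gs_le].
have uc : cvgn u.
  apply/cvg_ex; exists (sup (range u)); apply: nondecreasing_cvgn => //.
  by exists B => _ [n _ <-]; apply: hB.
have ucb : cauchy_ball (u @ \oo) by apply/cauchy_ballP; apply: cvg_cauchy.
have key n m : `|w n - w m| ^+ 2 <= `|u n - u m|.
  wlog nm : n m / (n <= m)%N.
    move=> W; case/orP: (leq_total n m) => /W // h.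
    by rewrite distrC (distrC (u n)).
  have := Q_mono (gs_gt0 m) (gs_le nm).
  rewrite -/(w m) -/(w n) -/(u n) -/(u m) => h.
  rewrite [`|w n - w m|]distrC -(ipxx hip) (le_trans h) // distrC.
  exact: ler_norm.
have wc : cvgn w.
  apply/cauchy_cvgP/cauchy_ballP => e epos.
  have := ucb (e ^+ 2) (exprn_gt0 2 epos).
  near_simpl; apply: filterS => -[n m] /=.
  rewrite -!ball_normE /= => h.
  have := le_lt_trans (key n m) h.
  by rewrite (@ltr_pXn2r R 2 isT) ?nnegrE // ltW.
exists (limn w); split => //.
have h1 : (S \o w) @ \oo --> S (limn w) by apply: cvg_comp wc (@Scont _).
have h2 : (S \o w) @ \oo --> v.
  have B0 : 0 <= B.
    have [_ h0 _ h] := Q_ge (gs_gt0 0); exact: le_trans (le_trans h0 h) (hB 0%N).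
  have B1pos : 0 < B + 1 by lra.
  apply/cvgrPdist_lt => e epos.
  have := near_infty_natSinv_lt (PosNum (divr_gt0 (exprn_gt0 2 epos) B1pos)).
  apply: filterS => n /= hn.
  rewrite /w SS_sol ?gs_gt0 // opprB addrCA subrr addr0.
  rewrite -(@ltr_pXn2r R 2 isT) ?nnegrE ?(ltW epos) //.
  rewrite -(ipxx hip) (ipZl hip) (ipZr hip).
  have g0 := gs_gt0 n.
  have [_ _ _ h] := Q_ge g0.
  have h3 : gs n * (B + 1) < e ^+ 2 by rewrite -ltr_pdivlMr.
  have h4 : gs n * (gs n * ip (sol (gs n)) (sol (gs n))) <= gs n * B.
    by rewrite ler_wpM2l ?(ltW g0) // (le_trans h) // hB.
  nra.
exact: (cvg_unique (@norm_hausdorff R V) h1 h2).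
Qed.


Lemma part_infty : ~ (exists x, S x = v) -> (fun g => (Q g)%:E) @ 0^'+ --> +oo%E.
Proof.
move=> nS; apply/cvgeyPge => A.
have [[n hn]|nex] := pselect (exists n, A < Q (gs n)).
  near=> g.
  have g0 : 0 < g by near: g; exact: nbhs_right_gt.
  have gle : g <= gs n by near: g; exact: nbhs_right_le (gs_gt0 n).
  by rewrite lee_fin (le_trans (ltW hn)) // Q_le.
exfalso; have hb : forall n, Q (gs n) <= A.
  by move=> n; rewrite leNgt; apply/negP => h; apply: nex; exists n.
have [w [_ Sw]] := bounded_conv hb.
by apply: nS; exists w.
Unshelve. all: by end_near.
Qed.

Lemma part_lim L : (forall g, 0 < g -> Q g <= L) ->
  (fun n => Q (gs n)) @ \oo --> L -> (fun g => (Q g)%:E) @ 0^'+ --> L%:E.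
Proof.
move=> hL hc; apply: cvg_EFin; first by near=> g.
apply/cvgrPdist_lt => e epos.
move/cvgrPdist_lt : hc => /(_ e epos) [N _ hN].
near=> g.
have g0 : 0 < g by near: g; exact: nbhs_right_gt.
have gle : g <= gs N by near: g; exact: nbhs_right_le (gs_gt0 N).
have h1 := hN N (leqnn N); rewrite /= in h1 |- *.
have h2 := Q_le g0 gle.
have h3 := hL g g0.
rewrite ger0_norm ?subr_ge0 //.
have := ler_norm (L - Q (gs N)); lra.
Unshelve. all: by end_near.
Qed.

End Main.

Unset Implicit Arguments. Set Strict Implicit.

Theorem proposition4 (R : realType) (V : completeNormedModType R)
  (ip : V -> V -> R) (r : R) (m m0 : V) (C C0 S S0 : V -> V) :
  is_inner_product ip -> separable V ->
  0 < r -> r < 1 ->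
  compact_op C -> self_adjoint ip C -> positive_op ip C ->
  compact_op C0 -> self_adjoint ip C0 -> positive_op ip C0 ->
  is_pos_sqrt ip (fun x => (1 - r) *: C x + r *: C0 x) S ->
  is_pos_sqrt ip C0 S0 ->
  [/\ (forall x : V, S x = m - m0 -> (forall z, S z = 0 -> ip x z = 0) ->
         (fun g : R => (quad_inv ip
            (fun y => (1 - r) *: (C y + g *: y) + r *: (C0 y + g *: y))
            (m - m0))%:E)
           @ 0^'+ --> (ip x x)%:E),
      (~ (exists x : V, S x = m - m0) ->
         (fun g : R => (quad_inv ip
            (fun y => (1 - r) *: (C y + g *: y) + r *: (C0 y + g *: y))
            (m - m0))%:E)
           @ 0^'+ --> +oo%E)
    & ((exists x : V, S0 x = m - m0) -> exists x : V, S x = m - m0)].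
Proof.
move=> hip _ r0 r1 [Clin _] Csa Cpos [C0lin _] C0sa C0pos
  [Slin Scont Ssa Spos SS] [S0lin S0cont S0sa S0pos S0S0].
set v := m - m0.
have Qeq : (fun g : R => (quad_inv ip
            (fun y => (1 - r) *: (C y + g *: y) + r *: (C0 y + g *: y)) v)%:E)
   = (fun g => (Q ip S v g)%:E).
  apply: funext => g; congr (_%:E); rewrite /Q; congr (quad_inv _ _ _).
  apply: funext => y; rewrite /Ag SS !scalerDr addrACA !scalerA -scalerDl.
  by congr (_ + _ *: _); ring.
rewrite Qeq; split.
- move=> x Sx hker.
  have hb : forall g, 0 < g -> Q ip S v g <= ip x x.
    move=> g g0; have [_ _ h _] := Q_ge hip Slin Scont Ssa v g0.
    have e : Q ip S v g = ip x (S (sol S v g)) by rewrite QE -Sx Ssa.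
    have := ipxx_ge0 hip (x - S (sol S v g)); rewrite ip_sq_expand //.
    lra.
  have [w [hw Sw]] := bounded_conv hip Slin Scont Ssa (fun n => hb _ (@gs_gt0 R n)).
  have xw : ip x w = ip x x.
    have : ip x (x - w) = 0 by apply: hker; rewrite SB // Sx Sw subrr.
    by rewrite (ipBr hip) => /eqP; rewrite subr_eq0 => /eqP.
  apply: (part_lim hip Slin Scont Ssa hb).
  rewrite -xw; apply/cvgrPdist_lt => e epos.
  have xe : 0 < e / (`|x| + 1) by rewrite divr_gt0 // ltr_wpDl.
  move/cvgrPdist_lt : hw => /(_ _ xe); apply: filterS => n /= hn.
  rewrite QE -{1}Sx Ssa -(ipBr hip).
  apply: (le_lt_trans (CS hip _ _)).
  have hx : 0 <= `|x| by [].
  have : `|x| * `|w - S (sol S v (@gs R n))| <= `|x| * (e / (`|x| + 1)).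
    by rewrite ler_wpM2l // ltW.
  have : `|x| * (e / (`|x| + 1)) < e.
    by rewrite mulrC -mulrA gtr_pMr // mulrC ltr_pdivrMr ?mul1r ?ltrDl // ltr_wpDl.
  lra.
- exact: (part_infty hip Slin Scont Ssa).
- move=> [u hu].
  have hb : forall g, 0 < g -> Q ip S v g <= ip u u / r.
    move=> g g0; have [h0 _ h _] := Q_ge hip Slin Scont Ssa v g0.
    have e : Q ip S v g = ip u (S0 (sol S v g)) by rewrite QE -hu S0sa.
    have et : ip (S0 (sol S v g)) (S0 (sol S v g)) = ip (C0 (sol S v g)) (sol S v g) by rewrite S0sa -S0S0 (ipC hip).
    have ew : ip (S (sol S v g)) (S (sol S v g)) = (1 - r) * ip (C (sol S v g)) (sol S v g) + r * ip (C0 (sol S v g)) (sol S v g).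
      by rewrite -Ssa SS (ipDl hip) !(ipZl hip).
    have hc := Cpos (sol S v g).
    have hc1 : 0 <= (1 - r) * ip (C (sol S v g)) (sol S v g) by rewrite mulr_ge0 // subr_ge0 ltW.
    have hq := ipxx_ge0 hip (u - r *: S0 (sol S v g)).
    rewrite ip_sq_expand // !(ipZl hip) !(ipZr hip) in hq.
    have h5 : r * (r * ip (S0 (sol S v g)) (S0 (sol S v g))) <= r * Q ip S v g.
      by rewrite ler_wpM2l ?(ltW r0) // et; nra.
    rewrite ler_pdivlMr //.
    nra.
  have [w [_ Sw]] := bounded_conv hip Slin Scont Ssa (fun n => hb _ (@gs_gt0 R n)).
  by exists w.
Qed.
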